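(* Let $x\cdot y$ be a PA-structure on $(\mathfrak{g},\mathfrak{n})$, where $\mathfrak{g}$ is abelian and $\mathfrak{n}$ is $2$-step nilpotent. Then $x\circ y=\frac12(x\cdot y+y\cdot x)$ defines a CPA-structure on $\mathfrak{n}$ if and only if $\{\mathfrak{n},\mathfrak{n}\}\cdot\mathfrak{n}=0$, i.e. $\{u,v\}\cdot w=0$ for all $u,v,w\in V$.
   Context: Let $K$ be a field of characteristic zero and $V$ a finite-dimensional vector space over $K$. Let $\mathfrak{g}=(V,[\,,])$ and $\mathfrak{n}=(V,\{\,,\})$ be two Lie algebra structures on $V$. A post-Lie algebra structure (PA-structure) on the pair $(\mathfrak{g},\mathfrak{n})$ is a $K$-bilinear product $x\cdot y$ on $V$ satisfying, for all $x,y,z\in V$: (i) $x\cdot y-y\cdot x=[x,y]-\{x,y\}$; (ii) $[x,y]\cdot z=x\cdot(y\cdot z)-y\cdot(x\cdot z)$; (iii) $x\cdot\{y,z\}=\{x\cdot y,z\}+\{y,x\cdot z\}$. A commutative post-Lie algebra structure (CPA-structure) on the Lie algebra $\mathfrak{n}=(V,\{\,,\})$ is a bilinear product $x\circ y$ on $V$ with $x\circ y=y\circ x$, $\{x,y\}\circ z=x\circ(y\circ z)-y\circ(x\circ z)$, and $x\circ\{y,z\}=\{x\circ y,z\}+\{y,x\circ z\}$ for all $x,y,z$. A Lie algebra is called $2$-step nilpotent here if it is nilpotent of class at most $2$. *)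

(* Defs.v *)
From HB Require Import structures.
From mathcomp Require Import all_boot all_order all_algebra.
Set Implicit Arguments. Unset Strict Implicit. Unset Printing Implicit Defensive.
Import GRing.Theory.
Local Open Scope ring_scope.

Section Defs.
Variables (K : fieldType) (V : vectType K).

Definition bilinear_prod (p : V -> V -> V) : Prop :=
  (forall (a : K) (x y z : V), p (a *: x + y) z = a *: p x z + p y z) /\
  (forall (a : K) (x y z : V), p x (a *: y + z) = a *: p x y + p x z).

Definition is_Lie (br : V -> V -> V) : Prop :=
  [/\ bilinear_prod br,
      (forall x, br x x = 0) &
      (forall x y z, br x (br y z) + br y (br z x) + br z (br x y) = 0)].

Definition is_abelian (br : V -> V -> V) : Prop := forall x y, br x y = 0.

Definition is_2step_nilpotent (br : V -> V -> V) : Prop :=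
  forall x y z, br (br x y) z = 0.

(* post-Lie algebra structure on (g, n) with g = (V, gb), n = (V, nb) *)
Definition is_PA (gb nb pa : V -> V -> V) : Prop :=
  [/\ bilinear_prod pa,
      (forall x y, pa x y - pa y x = gb x y - nb x y),
      (forall x y z, pa (gb x y) z = pa x (pa y z) - pa y (pa x z)) &
      (forall x y z, pa x (nb y z) = nb (pa x y) z + nb y (pa x z))].

Definition is_CPA (nb c : V -> V -> V) : Prop :=
  [/\ bilinear_prod c,
      (forall x y, c x y = c y x),
      (forall x y z, c (nb x y) z = c x (c y z) - c y (c x z)) &
      (forall x y z, c x (nb y z) = nb (c x y) z + nb y (c x z))].

End Defs.

(* Main.v *)
Require Import Defs.
From HB Require Import structures.
From mathcomp Require Import all_boot all_order all_algebra.
Import GRing.Theory.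
Local Open Scope ring_scope.

Set Implicit Arguments.
Section Bil.
Variables (K : fieldType) (V : vectType K) (p : V -> V -> V).
Hypothesis Hp : bilinear_prod p.

Lemma bDl x y z : p (x + y) z = p x z + p y z.
Proof. by have := (proj1 Hp) 1 x y z; rewrite !scale1r. Qed.
Lemma bDr x y z : p x (y + z) = p x y + p x z.
Proof. by have := (proj2 Hp) 1 x y z; rewrite !scale1r. Qed.
Lemma b0l z : p 0 z = 0.
Proof. have E := bDl 0 0 z; rewrite addr0 in E; apply: (addrI (p 0 z)); by rewrite addr0 -E. Qed.
Lemma b0r z : p z 0 = 0.
Proof. have E := bDr z 0 0; rewrite addr0 in E; apply: (addrI (p z 0)); by rewrite addr0 -E. Qed.
Lemma bZl a x z : p (a *: x) z = a *: p x z.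
Proof. by have := (proj1 Hp) a x 0 z; rewrite addr0 b0l addr0. Qed.
Lemma bZr a x z : p x (a *: z) = a *: p x z.
Proof. by have := (proj2 Hp) a x z 0; rewrite addr0 b0r addr0. Qed.
Lemma bNl x z : p (- x) z = - p x z.
Proof. by rewrite -scaleN1r bZl scaleN1r. Qed.
Lemma bNr x z : p x (- z) = - p x z.
Proof. by rewrite -scaleN1r bZr scaleN1r. Qed.
Lemma bBl x y z : p (x - y) z = p x z - p y z.
Proof. by rewrite bDl bNl. Qed.
End Bil.

Theorem corollary4p8 (K : fieldType) (V : vectType K)
  (charK0 : [pchar K] =i pred0)
  (gb nb pa : V -> V -> V)
  (Hg : is_Lie gb) (Hn : is_Lie nb)
  (Hgab : is_abelian gb) (Hn2 : is_2step_nilpotent nb)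
  (Hpa : is_PA gb nb pa) :
  is_CPA nb (fun x y => (2%:R : K)^-1 *: (pa x y + pa y x)) <->
  (forall u v w : V, pa (nb u v) w = 0).
Proof.
case: Hn => Bn Nxx _; case: Hpa => Bp Hcomm Hii Hiii.
set h := (2%:R : K)^-1.
have two0 : (2%:R : K) != 0.
  have := charK0 2; rewrite !inE /=. by move=> /negbT.
have hh (u : V) : h *: (u + u) = u.
  by rewrite scalerDr -scalerDl -mulr2n -mulr_natr mulVf // scale1r.
have Nanti x y : nb y x = - nb x y.
  apply/eqP; rewrite -addr_eq0; apply/eqP.
  have := Nxx (x + y); rewrite !(bDl Bn, bDr Bn) !Nxx add0r addr0.
  by rewrite addrC.
have swap x y : pa y x = pa x y + nb x y.
  by have := Hcomm x y; rewrite Hgab sub0r => E; rewrite -[nb x y]opprK -E opprB addrC subrK.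
have ceq x y : h *: (pa x y + pa y x) = pa x y + h *: nb x y.
  by rewrite (swap x y) addrA scalerDr hh.
have nn x y z : nb x (nb y z) = 0 by rewrite Nanti Hn2 oppr0.
have papa x y z : pa x (pa y z) - pa y (pa x z) = 0.
  by rewrite -Hii Hgab (b0l Bp).
have K2 x y z : h *: (pa x (h *: (pa y z + pa z y)) + pa (h *: (pa y z + pa z y)) x)
   - h *: (pa y (h *: (pa x z + pa z x)) + pa (h *: (pa x z + pa z x)) y) = 0.
  rewrite !ceq !(bDr Bp, bDr Bn, bZr Bp, bZr Bn) !nn !Hiii scaler0 !addr0 (swap x y) (bDl Bn) Hn2 addr0.
  rewrite -[pa x (pa y z) + _ + _]addrA -[pa y (pa x z) + _ + _]addrA opprD addrACA papa add0r; apply/eqP; rewrite subr_eq0; apply/eqP.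
  by rewrite !scalerDr addrAC.
have K1 x y z : h *: (pa (nb x y) z + pa z (nb x y)) = pa (nb x y) z.
  by rewrite ceq Hn2 scaler0 addr0.
have K3 x y z : h *: (pa x (nb y z) + pa (nb y z) x) =
   nb (h *: (pa x y + pa y x)) z + nb y (h *: (pa x z + pa z x)).
  rewrite !ceq nn scaler0 addr0 Hiii (bDl Bn) (bDr Bn) (bZl Bn) (bZr Bn) Hn2 nn !scaler0 !addr0.
  done.
have K4 : bilinear_prod (fun x y => h *: (pa x y + pa y x)).
  split=> a x y z /=; rewrite !ceq !(bDl Bp, bDr Bp, bDl Bn, bDr Bn, bZl Bp, bZr Bp, bZl Bn, bZr Bn).
  - rewrite scalerDr scalerA mulrC -scalerA addrACA -scalerDr. done.
  - rewrite scalerDr scalerA mulrC -scalerA addrACA -scalerDr. done.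
split.
  by case=> _ _ H3 _ u v w; have := H3 u v w; rewrite K1 K2.
move=> H; split => //.
- by move=> x y; rewrite addrC.
- by move=> x y z; rewrite K1 K2 H.
Qed.
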